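(* The Heisenberg Lie algebra $H(m)$ is $2$-capable if and only if $m=1$.
   Context: All Lie algebras are over a fixed field. The Heisenberg Lie algebra $H(m)$ is the Lie algebra of dimension $2m+1$ with $H(m)^2=Z(H(m))$ and $\dim H(m)^2=1$. A Lie algebra $L$ is $2$-capable if $L\cong H/Z_2(H)$ for some Lie algebra $H$, where $Z_2(H)$ is the second term of the upper central series of $H$. *)

(* Defs.v *)
From HB Require Import structures.
From mathcomp Require Import all_boot all_order all_algebra.
Set Implicit Arguments. Unset Strict Implicit. Unset Printing Implicit Defensive.
Import GRing.Theory.
Local Open Scope ring_scope.

Definition is_lie (F : fieldType) (V : lmodType F) (br : V -> V -> V) : Prop :=
  [/\ (forall (a : F) (x y z : V), br (a *: x + y) z = a *: br x z + br y z),
      (forall (a : F) (x y z : V), br z (a *: x + y) = a *: br z x + br z y),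
      (forall x : V, br x x = 0)
    & (forall x y z : V, br x (br y z) + br y (br z x) + br z (br x y) = 0)].

Definition lie_hom (F : fieldType) (V W : lmodType F)
    (brV : V -> V -> V) (brW : W -> W -> W) (f : V -> W) : Prop :=
  (forall (a : F) (x y : V), f (a *: x + y) = a *: f x + f y) /\
  (forall x y : V, f (brV x y) = brW (f x) (f y)).

Definition lie_center (F : fieldType) (V : lmodType F) (br : V -> V -> V) (x : V) : Prop :=
  forall y : V, br x y = 0.

(* second center Z_2(L): Z_2(L)/Z(L) = Z(L/Z(L)) *)
Definition lie_center2 (F : fieldType) (V : lmodType F) (br : V -> V -> V) (x : V) : Prop :=
  forall y : V, lie_center br (br x y).

Definition lie_derived (F : fieldType) (V : lmodType F) (br : V -> V -> V) (x : V) : Prop :=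
  exists s : seq (V * V), x = \sum_(p <- s) br p.1 p.2.

Definition heisenberg (F : fieldType) (L : vectType F) (br : L -> L -> L) (m : nat) : Prop :=
  [/\ \dim (fullv : {vspace L}) = (2 * m + 1)%N,
      (forall x : L, lie_derived br x <-> lie_center br x)
    & (exists2 z : L, z != 0 &
         forall x : L, lie_derived br x <-> exists a : F, x = a *: z)].

(* L is 2-capable: L is isomorphic to H/Z_2(H) for some Lie algebra H, i.e.
   there is a surjective Lie algebra homomorphism H -> L with kernel Z_2(H). *)
Definition two_capable (F : fieldType) (L : lmodType F) (brL : L -> L -> L) : Prop :=
  exists (H : lmodType F) (brH : H -> H -> H) (f : H -> L),
    [/\ is_lie brH, lie_hom brH brL f,
        (forall y : L, exists x : H, f x = y)
      & (forall x : H, f x = 0 <-> lie_center2 brH x)].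

(* Main.v *)
From HB Require Import structures.
Require Import Defs.
From mathcomp Require Import all_boot all_order all_algebra.
From mathcomp Require Import ring zify.
From Stdlib Require Import Classical.
Set Implicit Arguments. Unset Strict Implicit. Unset Printing Implicit Defensive.
Import GRing.Theory.
Local Open Scope ring_scope.

Section Br.
Variables (F : fieldType) (V : lmodType F) (b : V -> V -> V).
Hypothesis Hb : is_lie b.

Lemma bDl x y z : b (x + y) z = b x z + b y z.
Proof. case: Hb => H _ _ _; by have := H 1 x y z; rewrite !scale1r. Qed.
Lemma bDr x y z : b z (x + y) = b z x + b z y.
Proof. case: Hb => _ H _ _; by have := H 1 x y z; rewrite !scale1r. Qed.
Lemma b0l z : b 0 z = 0.
Proof. by apply: (addrI (b 0 z)); rewrite -bDl !addr0. Qed.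
Lemma b0r z : b z 0 = 0.
Proof. by apply: (addrI (b z 0)); rewrite -bDr !addr0. Qed.
Lemma bZl a x z : b (a *: x) z = a *: b x z.
Proof. case: Hb => H _ _ _; by have := H a x 0 z; rewrite !addr0 b0l addr0. Qed.
Lemma bZr a x z : b z (a *: x) = a *: b z x.
Proof. case: Hb => _ H _ _; by have := H a x 0 z; rewrite !addr0 b0r addr0. Qed.
Lemma bNl x z : b (- x) z = - b x z.
Proof. by rewrite -scaleN1r bZl scaleN1r. Qed.
Lemma bNr x z : b z (- x) = - b z x.
Proof. by rewrite -scaleN1r bZr scaleN1r. Qed.
Lemma bBl x y z : b (x - y) z = b x z - b y z.
Proof. by rewrite bDl bNl. Qed.
Lemma bBr x y z : b z (x - y) = b z x - b z y.
Proof. by rewrite bDr bNr. Qed.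
Lemma bxx x : b x x = 0.
Proof. by case: Hb. Qed.
Lemma banti x y : b x y = - b y x.
Proof.
have := bxx (x + y); rewrite bDl !bDr !bxx add0r addr0 => /eqP.
by rewrite addr_eq0 => /eqP.
Qed.
Lemma bjac x y z : b x (b y z) + b y (b z x) + b z (b x y) = 0.
Proof. by case: Hb. Qed.
End Br.

Section Hom.
Variables (F : fieldType) (V W : lmodType F) (bV : V -> V -> V) (bW : W -> W -> W) (f : V -> W).
Hypothesis Hf : lie_hom bV bW f.
Lemma fD x y : f (x + y) = f x + f y.
Proof. case: Hf => H _; by have := H 1 x y; rewrite !scale1r. Qed.
Lemma f0 : f 0 = 0.
Proof. by apply: (addrI (f 0)); rewrite -fD !addr0. Qed.
Lemma fZ a x : f (a *: x) = a *: f x.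
Proof. case: Hf => H _; by have := H a x 0; rewrite !addr0 f0 addr0. Qed.
Lemma fB x y : f (x - y) = f x - f y.
Proof. by rewrite fD -scaleN1r fZ scaleN1r. Qed.
Lemma fbr x y : f (bV x y) = bW (f x) (f y).
Proof. by case: Hf. Qed.
End Hom.

Section LSide.
Variables (F : fieldType) (L : vectType F) (br : L -> L -> L) (z : L).
Hypothesis HL : is_lie br.
Hypothesis Hz : z != 0.
Hypothesis Hder : forall x : L, lie_derived br x <-> exists a : F, x = a *: z.
Hypothesis Hcen : forall x : L, lie_derived br x <-> lie_center br x.

Lemma br_der u v : lie_derived br (br u v).
Proof. by exists [:: (u, v)]; rewrite big_cons big_nil addr0. Qed.

Lemma br_mul u v : exists a, br u v = a *: z.
Proof. exact/Hder/br_der. Qed.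

Lemma cen_mul x : lie_center br x -> exists a, x = a *: z.
Proof. by move/Hcen/Hder. Qed.

Lemma mul_cen a : lie_center br (a *: z).
Proof. by apply/Hcen/Hder; exists a. Qed.

Lemma br_cen u v w : br (br u v) w = 0.
Proof. by have /Hcen := br_der u v; apply. Qed.

Lemma br_cenr u v w : br w (br u v) = 0.
Proof. by rewrite (banti HL) br_cen oppr0. Qed.

Lemma exists_nz : exists u v, br u v != 0.
Proof.
have [s Es] : lie_derived br z by apply/Hder; exists 1; rewrite scale1r.
move: Hz; rewrite Es {Es}; elim: s => [|p s IH]; first by rewrite big_nil eqxx.
rewrite big_cons; case: (eqVneq (br p.1 p.2) 0) => [->|h]; last by exists p.1, p.2.
by rewrite add0r.
Qed.

Lemma brk_lin k : linear (fun x => br x k).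
Proof. by move=> a u v; rewrite (bDl HL) (bZl HL). Qed.

Definition brk (k : L) : {linear L -> L} := HB.pack (fun x => br x k)
     (GRing.isLinear.Build F L L *:%R (fun x => br x k) (brk_lin k)).

Lemma dim_ker_ge k : (\dim {:L} <= (\dim (lker (linfun (brk k)))).+1)%N.
Proof.
set g := linfun _.
have := limg_ker_dim g fullv; rewrite capfv => <-.
suff : (\dim (g @: fullv) <= 1)%N by lia.
have : (g @: fullv <= <[z]>)%VS.
  apply/subvP => w /memv_imgP [v _ ->]; rewrite /g lfunE /=.
  have [a ->] := br_mul v k; exact/memvZ/memv_line.
by move/dimvS; rewrite dim_vline Hz.
Qed.

Lemma key_lemma (m : nat) : \dim {:L} = (2 * m + 1)%N -> (2 <= m)%N ->
  forall k, exists u v, [/\ br u k = 0, br v k = 0 & br u v != 0].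
Proof.
move=> Hdim Hm k; apply: NNPP => Hn.
have Hab : forall u v, br u k = 0 -> br v k = 0 -> br u v = 0.
  move=> u v hu hv; apply: NNPP => /eqP huv; apply: Hn; by exists u, v.
have [kc|nkc] := classic (lie_center br k).
  have [u [v /eqP []]] := exists_nz; apply: Hab.
    by rewrite (banti HL) kc oppr0.
  by rewrite (banti HL) kc oppr0.
have [y hy] : exists y, br k y != 0.
  apply: NNPP => hh; apply: nkc => y; apply: NNPP => /eqP h; apply: hh; by exists y.
have [be hbe] := br_mul y k.
have be0 : be != 0.
  apply: contraNneq hy => be0; by rewrite (banti HL) hbe be0 scale0r oppr0.
have dk := dim_ker_ge k; have dy := dim_ker_ge y.
set gk' := linfun _ in dk; set gy := linfun _ in dy.
have sub : (lker gk' :&: lker gy <= <[z]>)%VS.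
  apply/subvP => w; rewrite memv_cap !memv_ker /gk' /gy !lfunE /= => /andP [/eqP wk /eqP wy].
  have /cen_mul [a ->] : lie_center br w.
    move=> x; have [ga hga] := br_mul x k.
    pose q := x - (ga / be) *: y.
    have hq : br q k = 0.
      by rewrite /q (bBl HL) (bZl HL) hga hbe scalerA divfK // subrr.
    have -> : x = q + (ga / be) *: y by rewrite /q subrK.
    by rewrite (bDr HL) (bZr HL) wy scaler0 addr0 Hab.
  exact/memvZ/memv_line.
have := dimvS sub; rewrite dim_vline Hz => hc.
have := dimv_sum_cap (lker gk') (lker gy).
have := dimvS (subvf (lker gk' + lker gy)).
lia.
Qed.
End LSide.

Lemma not_cap (F : fieldType) (L : vectType F) (br : L -> L -> L) (z : L) :
  is_lie br -> z != 0 ->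
  (forall x : L, lie_derived br x <-> exists a : F, x = a *: z) ->
  (forall k, exists u v, [/\ br u k = 0, br v k = 0 & br u v != 0]) ->
  two_capable br -> False.
Proof.
move=> HL Hz Hder Hk [H [brH [f [HH Hf Hsurj Hker]]]].
have [c fc] := Hsurj z.
have Z2 : forall x, f x = 0 -> forall y y', brH (brH x y) y' = 0.
  by move=> x /Hker.
suff : f c = 0 by rewrite fc => /eqP; rewrite (negbTE Hz).
apply/Hker => h h'.
have [u [v [hu hv huv]]] := Hk (f h).
have [a ha] := br_mul Hder u v.
have a0 : a != 0 by apply: contraNneq huv => a0; rewrite ha a0 scale0r.
have [U fU] := Hsurj u; have [V fV] := Hsurj v.
have e1 : f (brH U V - a *: c) = 0.
  by rewrite (fB Hf) (fZ Hf) (fbr Hf) fU fV fc ha subrr.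
have e2 : f (brH V h) = 0 by rewrite (fbr Hf) fV.
have e3 : f (brH h U) = 0 by rewrite (fbr Hf) fU (banti HL) hu oppr0.
have j := bjac HH U V h.
have t1 : brH (brH U (brH V h)) h' = 0.
  by rewrite (banti HH U) (bNl HH) Z2 ?oppr0.
have t2 : brH (brH V (brH h U)) h' = 0.
  by rewrite (banti HH V) (bNl HH) Z2 ?oppr0.
have t3 : brH (brH (brH U V) h) h' = 0.
  have : brH (brH U (brH V h) + brH V (brH h U) + brH h (brH U V)) h' = 0.
    by rewrite j (b0l HH).
  by rewrite !(bDl HH) t1 t2 !add0r (banti HH h) (bNl HH) => /eqP; rewrite oppr_eq0 => /eqP.
have := Z2 _ e1 h h'.
rewrite (bBl HH) (bBl HH) (bZl HH) (bZl HH) t3 sub0r => /eqP.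
by rewrite oppr_eq0 scaler_eq0 (negbTE a0) => /eqP.
Qed.

Section HAlg.
Variable F : fieldType.
Local Notation H := 'rV[F]_5.

Definition co (x : H) (i : nat) : F := x 0 (inord i).

Definition brH (x y : H) : H := \row_(i < 5)
  match nat_of_ord i with
  | 2 => co x 0 * co y 1 - co x 1 * co y 0
  | 3 => co x 0 * co y 2 - co x 2 * co y 0
  | 4 => co x 0 * co y 3 - co x 3 * co y 0 + co x 1 * co y 2 - co x 2 * co y 1
  | _ => 0 end.

Definition mk (a b c : F) : H := \row_(i < 5)
  match nat_of_ord i with 0 => a | 1 => b | 2 => c | _ => 0 end.

Lemma co_add x y i : co (x + y) i = co x i + co y i.
Proof. by rewrite /co mxE. Qed.
Lemma co_scale a x i : co (a *: x) i = a * co x i.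
Proof. by rewrite /co mxE. Qed.
Lemma co_0 i : co 0 i = 0.
Proof. by rewrite /co mxE. Qed.

Lemma co_brH0 x y : co (brH x y) 0 = 0. Proof. by rewrite /co mxE inordK. Qed.
Lemma co_brH1 x y : co (brH x y) 1 = 0. Proof. by rewrite /co mxE inordK. Qed.
Lemma co_brH2 x y : co (brH x y) 2 = co x 0 * co y 1 - co x 1 * co y 0.
Proof. by rewrite /co mxE inordK. Qed.
Lemma co_brH3 x y : co (brH x y) 3 = co x 0 * co y 2 - co x 2 * co y 0.
Proof. by rewrite /co mxE inordK. Qed.
Lemma co_brH4 x y : co (brH x y) 4 =
  co x 0 * co y 3 - co x 3 * co y 0 + co x 1 * co y 2 - co x 2 * co y 1.
Proof. by rewrite /co mxE inordK. Qed.

Lemma co_mk0 a b c : co (mk a b c) 0 = a. Proof. by rewrite /co mxE inordK. Qed.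
Lemma co_mk1 a b c : co (mk a b c) 1 = b. Proof. by rewrite /co mxE inordK. Qed.
Lemma co_mk2 a b c : co (mk a b c) 2 = c. Proof. by rewrite /co mxE inordK. Qed.
Lemma co_mk3 a b c : co (mk a b c) 3 = 0. Proof. by rewrite /co mxE inordK. Qed.
Lemma co_mk4 a b c : co (mk a b c) 4 = 0. Proof. by rewrite /co mxE inordK. Qed.

Lemma row_ext (x y : H) : (forall i, (i < 5)%N -> co x i = co y i) -> x = y.
Proof.
move=> h; apply/rowP => j; have := h j (ltn_ord j).
by rewrite /co inord_val.
Qed.

Definition coE := (co_add, co_scale, co_0, co_brH0, co_brH1, co_brH2, co_brH3, co_brH4,
  co_mk0, co_mk1, co_mk2, co_mk3, co_mk4).

Lemma brH_lie : is_lie brH.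
Proof.
split.
- move=> a x y w; apply: row_ext => -[|[|[|[|[|i]]]]] // _; rewrite !coE; ring.
- move=> a x y w; apply: row_ext => -[|[|[|[|[|i]]]]] // _; rewrite !coE; ring.
- move=> x; apply: row_ext => -[|[|[|[|[|i]]]]] // _; rewrite !coE; ring.
- move=> x y w; apply: row_ext => -[|[|[|[|[|i]]]]] // _; rewrite !coE; ring.
Qed.

Lemma brH_Z2 a : lie_center2 brH a <-> [/\ co a 0 = 0, co a 1 = 0 & co a 2 = 0].
Proof.
split.
- move=> h.
  have h1 := congr1 (co^~ 3) (h (mk 1 0 0) (mk 1 0 0)).
  have h2 := congr1 (co^~ 4) (h (mk 1 0 0) (mk 1 0 0)).
  have h3 := congr1 (co^~ 3) (h (mk 0 1 0) (mk 1 0 0)).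
  move: h1 h2 h3; rewrite !coE => h1 h2 h3.
  split.
  + by apply/eqP; rewrite -oppr_eq0; apply/eqP; rewrite -h3; ring.
  + by rewrite -h1; ring.
  + by rewrite -h2; ring.
- case=> h0 h1 h2 y y'; apply: row_ext => -[|[|[|[|[|i]]]]] // _; rewrite !coE ?h0 ?h1 ?h2; ring.
Qed.
End HAlg.

Lemma add6 (V : nmodType) (A A' B B' C C' : V) :
  A + A' + (B + B') + (C + C') = A + B + C + (A' + B' + C').
Proof. by rewrite (addrACA A) addrACA. Qed.

Lemma cap_m1 (F : fieldType) (L : vectType F) (br : L -> L -> L) :
  is_lie br -> heisenberg br 1 -> two_capable br.
Proof.
move=> HL [Hdim Hcen [z Hz Hder]].
have [x [y nz]] := exists_nz Hz Hder.
have c1 := br_cen Hcen; have c2 := br_cenr HL Hcen.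
pose f (a : 'rV[F]_5) := co a 0 *: x + co a 1 *: y + co a 2 *: br x y.
have fE : forall a, f a = co a 0 *: x + co a 1 *: y + co a 2 *: br x y by [].
have byx : br y x = - br x y by rewrite (banti HL).
exists [the lmodType F of 'rV[F]_5], (@brH F), f; split.
- exact: brH_lie.
- split.
  + move=> a u v; rewrite !fE !coE !scalerDl -!scalerA !scalerDr.
    by rewrite add6.
  + move=> u v; rewrite !fE !coE !scale0r !add0r.
    rewrite !(bDl HL) !(bDr HL) !(bZl HL) !(bZr HL) !(bxx HL) byx !c1 !c2.
    rewrite !scaler0 !addr0 !add0r !scalerN !scalerA -scaleNr -scalerDl.
    by [].
- have fr : free [:: x; y; br x y].
    rewrite (free_cons x) (free_cons y) seq1_free nz andbT !span_cons span_nil !addv0.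
    apply/andP; split.
      apply/negP => /memv_addP [u /vlineP [k ->] [w /vlineP [l ->] ex]].
      move/eqP: nz; apply; rewrite {1}ex (bDl HL) !(bZl HL) (bxx HL) c1.
      by rewrite !scaler0 addr0.
    apply/negP => /vlineP [k ey].
    have := byx; rewrite {1}ey (bZl HL) c1 scaler0 => /eqP.
    by rewrite eq_sym oppr_eq0 (negbTE nz).
  have dX : \dim <<[:: x; y; br x y]>> = 3%N by apply/eqP.
  have eX : <<[:: x; y; br x y]>>%VS = fullv.
    by apply/eqP; rewrite eqEdim subvf /= Hdim dX.
  move=> v; have : v \in <<[:: x; y; br x y]>>%VS by rewrite eX memvf.
  rewrite !span_cons span_nil !addv0.
  move=> /memv_addP [u /vlineP [k ->] [w /memv_addP [u' /vlineP [k' ->] [w' /vlineP [k'' ->] ->]] ->]].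
  exists (mk k k' k''); by rewrite fE !coE addrA.
- move=> a; rewrite brH_Z2; split; last first.
    by case=> h0 h1 h2; rewrite fE h0 h1 h2 !scale0r !addr0.
  move=> fa.
  have hy : br (f a) y = co a 0 *: br x y.
    by rewrite fE !(bDl HL) !(bZl HL) (bxx HL) c1 !scaler0 !addr0.
  have hx : br (f a) x = - (co a 1 *: br x y).
    by rewrite fE !(bDl HL) !(bZl HL) (bxx HL) c1 byx !scaler0 addr0 add0r scalerN.
  have h0 : co a 0 = 0.
    by move: hy; rewrite fa (b0l HL) => /eqP; rewrite eq_sym scaler_eq0 (negbTE nz) orbF => /eqP.
  have h1 : co a 1 = 0.
    by move: hx; rewrite fa (b0l HL) => /eqP; rewrite eq_sym oppr_eq0 scaler_eq0 (negbTE nz) orbF => /eqP.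
  split => //.
  by move: fa; rewrite fE h0 h1 !scale0r !add0r => /eqP; rewrite scaler_eq0 (negbTE nz) orbF => /eqP.
Qed.

Theorem theorem3p3 (F : fieldType) (m : nat) (L : vectType F)
    (br : L -> L -> L) (HL : is_lie br) (HH : heisenberg br m) :
  two_capable br <-> m = 1%N.
Proof.
case: (HH) => Hdim Hcen [z Hz Hder].
split; last by move=> Hm; subst m; exact: cap_m1.
move=> cap.
case: m HH Hdim => [|[|m]] HH Hdim //.
- exfalso.
  have eZ : (<[z]> == fullv)%VS by rewrite eqEdim subvf /= dim_vline Hz Hdim.
  have [u [v]] := exists_nz Hz Hder.
  have /vlineP [a ->] : u \in <[z]>%VS by rewrite (eqP eZ) memvf.
  have /vlineP [b ->] : v \in <[z]>%VS by rewrite (eqP eZ) memvf.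
  by rewrite (bZl HL) (bZr HL) (bxx HL) !scaler0 eqxx.
- exfalso; apply: (not_cap HL Hz Hder _ cap).
  by apply: (key_lemma HL Hz Hder Hcen Hdim).
Qed.
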